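(* For every integer $n>1$ and every $k\in\mathbb{Z}$, $$(\Lambda_{Ld}\ast\beta_k)(n)=Ld(n)\beta_k(n)-\beta_{k-1}(n).$$
   Context: $Ld(n)=\sum_{p^\alpha\parallel n}\frac{\alpha}{p}$ (sum over primes $p\mid n$, $\alpha$ the exact exponent of $p$ in $n$). $\Lambda_{Ld}(n)=\frac1p$ if $n=p^k$ for some prime $p$ and integer $k\geq1$, and $0$ otherwise. $\beta_k(n)=\sum_{p\mid n}p^k$ (sum over distinct primes dividing $n$). $\ast$ is Dirichlet convolution. *)

(* Defs.v *)
From mathcomp Require Import all_boot all_order all_algebra.
Set Implicit Arguments. Unset Strict Implicit. Unset Printing Implicit Defensive.
Import Order.TTheory GRing.Theory Num.Theory.
Local Open Scope ring_scope.

Definition dconv (f g : nat -> rat) (n : nat) : rat :=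
  \sum_(d <- divisors n) f d * g (n %/ d)%N.

Definition Ld (n : nat) : rat :=
  \sum_(p <- primes n) (logn p n)%:R / p%:R.

Definition LambdaLd (n : nat) : rat :=
  match [pick p : 'I_n.+1 | prime p &&
           [exists k : 'I_n.+1, (0 < k)%N && (n == p ^ k)%N]] with
  | Some p => (nat_of_ord p)%:R^-1
  | None => 0
  end.

Definition beta (k : int) (n : nat) : rat :=
  \sum_(p <- primes n) (p%:R : rat) ^ k.

(* Main.v *)
Require Import Defs.
From mathcomp Require Import all_boot all_order all_algebra.
Import GRing.Theory Num.Theory.
Local Open Scope ring_scope.

Lemma sum_ind1 (a m : nat) (c : rat) : (0 < m <= a)%N ->
  \sum_(j < a) (m == j.+1)%:R * c = c.
Proof.
case: m => // i /= lt_ia.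
rewrite (bigD1 (Ordinal lt_ia)) //= eqxx mul1r big1 ?addr0 // => j /=.
by rewrite -val_eqE /= eqSS eq_sym => /negbTE ->; rewrite mul0r.
Qed.

Lemma LambdaLd_sum (n d : nat) : (0 < n)%N -> (d %| n)%N ->
  LambdaLd d = \sum_(p <- primes n) \sum_(j < logn p n)
                 (d == p ^ j.+1)%N%:R * (p%:R)^-1.
Proof.
move=> n0 dn; rewrite /LambdaLd.
case: pickP => [p0 /andP [pr /existsP [k0 /andP [k0pos /eqP dE]]] | H].
- move: (nat_of_ord p0) (nat_of_ord k0) pr k0pos dE => {}p0 {}k0 pr k0pos dE.
  have p0n : p0 \in primes n.
    by rewrite mem_primes pr n0 /= (dvdn_trans _ dn) // dE dvdn_exp.
  rewrite (bigD1_seq p0) ?primes_uniq //=.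
  rewrite [X in _ + X]big1_seq ?addr0.
    rewrite (eq_bigr (fun j : 'I_ _ => (k0 == j.+1)%:R * p0%:R^-1)); last first.
      by move=> j _; rewrite dE eqn_exp2l ?prime_gt1.
    by rewrite sum_ind1 // k0pos /= -{1}(pfactorK k0 pr) -dE dvdn_leq_log.
  move=> q /andP [qp0 qn]; apply: big1 => j _.
  case: eqP; last by rewrite mul0r.
  move=> /(congr1 (logn q)); rewrite dE pfactorK; last by move: qn; rewrite mem_primes => /and3P[].
  by rewrite lognX logn_prime // (negbTE qp0) muln0.
- symmetry; apply: big1_seq => p /andP [_ pn]; apply: big1 => j _.
  case: eqP; last by rewrite mul0r.
  move=> dE; exfalso.
  have pr : prime p by move: pn; rewrite mem_primes => /and3P[].
  have p1 := prime_gt1 pr.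
  have hp : (p < d.+1)%N by rewrite ltnS dE -{1}(expn1 p) leq_pexp2l // ltnW.
  have hj : (j.+1 < d.+1)%N by rewrite ltnS dE ltnW // ltn_expl.
  move: (H (Ordinal hp)); rewrite /= pr /=.
  suff -> : [exists k : 'I_d.+1, (0 < k)%N && (d == p ^ k)%N] by [].
  by apply/existsP; exists (Ordinal hj); rewrite /= dE eqxx.
Qed.

Lemma beta_sub (k : int) (n m : nat) : (0 < n)%N -> (m %| n)%N ->
  beta k m = \sum_(q <- primes n) (0 < logn q m)%N%:R * (q%:R : rat) ^ k.
Proof.
move=> n0 mn.
have m0 : (0 < m)%N by apply: dvdn_gt0 mn.
rewrite /beta; have -> : primes m = [seq q <- primes n | (0 < logn q m)%N].
  apply: (irr_sorted_eq ltn_trans ltnn (sorted_primes m)).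
    by apply: sorted_filter; [exact: ltn_trans | exact: sorted_primes].
  move=> q; rewrite mem_filter logn_gt0.
  case qm: (q \in primes m) => //=.
  move: qm; rewrite !mem_primes => /and3P [-> _ qm]; rewrite n0.
  by rewrite (dvdn_trans qm mn).
rewrite big_filter big_mkcond /=; apply: eq_bigr => q _.
by case: ifP; rewrite ?mul1r ?mul0r.
Qed.

Lemma beta_quot (k : int) (n p j : nat) : (0 < n)%N -> p \in primes n ->
  (j < logn p n)%N ->
  beta k (n %/ p ^ j.+1) = beta k n - (j.+1 == logn p n)%N%:R * (p%:R : rat) ^ k.
Proof.
move=> n0 pn jl.
have pr : prime p by move: pn; rewrite mem_primes => /and3P[].
have pd : (p ^ j.+1 %| n)%N by rewrite pfactor_dvdn.
rewrite (@beta_sub k n) ?dvdn_div // /beta.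
rewrite (bigD1_seq p) ?primes_uniq //= (bigD1_seq p pn) ?primes_uniq //=.
have -> : \sum_(i <- primes n | i != p) (0 < logn i (n %/ p ^ j.+1))%:R * i%:R ^ k
    = \sum_(i <- primes n | i != p) (i%:R : rat) ^ k.
  rewrite big_seq_cond [RHS]big_seq_cond; apply: eq_bigr => i /andP [ipn ip].
  by rewrite logn_div // lognX (logn_prime i pr) (negbTE ip) muln0 subn0 logn_gt0 ipn mul1r.
rewrite logn_div // pfactorK // subn_gt0.
case E: (j.+1 == logn p n).
  by rewrite (eqP E) ltnn mul0r add0r mul1r addrAC subrr add0r.
by rewrite ltn_neqAle E jl /= mul1r mul0r subr0.
Qed.

Theorem theorem3p3 (n : nat) (k : int) : (1 < n)%N ->
  dconv LambdaLd (beta k) n = Ld n * beta k n - beta (k - 1) n.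
Proof.
move=> n1; have n0 : (0 < n)%N by apply: ltnW.
rewrite /dconv big_seq.
rewrite (eq_bigr (fun d => \sum_(p <- primes n) \sum_(j < logn p n)
    (d == p ^ j.+1)%N%:R * (p%:R)^-1 * beta k (n %/ d))); last first.
  move=> d dn; rewrite (@LambdaLd_sum n d) //; last by rewrite dvdn_divisors.
  rewrite big_distrl /=.
  by apply: eq_bigr => p _; rewrite big_distrl.
rewrite -big_seq exchange_big /=.
have step : forall p, p \in primes n ->
  \sum_(d <- divisors n) \sum_(j < logn p n)
      (d == p ^ j.+1)%N%:R * (p%:R)^-1 * beta k (n %/ d)
  = (logn p n)%:R * (p%:R)^-1 * beta k n - (p%:R : rat) ^ (k - 1).
  move=> p pn.
  have pr : prime p by move: pn; rewrite mem_primes => /and3P[].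
  have p0 : (p%:R : rat) != 0 by rewrite pnatr_eq0 -lt0n prime_gt0.
  rewrite exchange_big /=.
  rewrite (eq_bigr (fun j : 'I_(logn p n) => (p%:R)^-1 * beta k n
      - (logn p n == j.+1)%N%:R * ((p%:R)^-1 * (p%:R : rat) ^ k))); last first.
    move=> j _.
    rewrite (bigD1_seq (p ^ j.+1)%N) ?divisors_uniq //=; last first.
      by rewrite -dvdn_divisors // pfactor_dvdn // (ltn_ord j).
    rewrite eqxx mul1r big1_seq ?addr0; last first.
      by move=> d /andP [dj _]; rewrite (negbTE dj) !mul0r.
    by rewrite (beta_quot k n p j n0 pn (ltn_ord j)) mulrBr eq_sym mulrCA.
  rewrite sumrB sumr_const card_ord sum_ind1; last by rewrite logn_gt0 pn /=.
  rewrite expfzDr // exprN1 -(mulr_natl (p%:R^-1 * beta k n)) mulrA (mulrC (p%:R ^ k)); congr (_ - _); congr (_ * _).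
rewrite big_seq (eq_bigr _ step) -big_seq sumrB /Ld big_distrl /=.
by congr (_ - _); apply: eq_bigr => p _; rewrite mulrC mulr_natl.
Qed.
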